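(* Let $U\in\mathrm{St}(r,n)$ and suppose $\Psi^{-1}U=P\begin{bsmallmatrix}K_r\\ O_{n-r,r}\end{bsmallmatrix}$ with $P\in\mathbb{C}^{n\times n}$ unitary and $K_r\in\mathbb{C}^{r\times r}$ invertible. Then there is a unitary matrix $W_P\in\mathbb{C}^{r\times r}$ such that $K_r=(\Sigma_{11}^P)^{-1/2}W_P$. Moreover, for any orthogonal $W\in\mathbb{R}^{r\times r}$, $\Psi P\begin{bsmallmatrix}(\Sigma_{11}^P)^{-1/2}W_PW\\ O_{n-r,r}\end{bsmallmatrix}=UW\in\mathrm{St}(r,n)$.
   Context: $\mathrm{St}(r,n):=\{X\in\mathbb{R}^{n\times r}\mid X^{\top}X=I_r\}$, $1\le r\le n-1$. $\Psi\in\mathbb{C}^{n\times n}$ is an invertible matrix whose columns are unit-norm (generalized) eigenvectors of a real matrix $A\in\mathbb{R}^{n\times n}$. For unitary $P$, $\Sigma^P:=P^{\dagger}\Psi^{\dagger}\Psi P$ and $\Sigma_{11}^P\in\mathbb{C}^{r\times r}$ is its upper-left $r\times r$ block (a positive definite Hermitian matrix); $(\Sigma_{11}^P)^{-1/2}$ is its inverse Hermitian positive definite square root. *)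

(* Defs.v *)
From HB Require Import structures.
From mathcomp Require Import all_boot all_order all_algebra.
From mathcomp Require Export sesquilinear spectral.
Set Implicit Arguments. Unset Strict Implicit. Unset Printing Implicit Defensive.
Import Order.TTheory GRing.Theory Num.Theory.
Local Open Scope ring_scope.
Local Open Scope sesquilinear_scope.

(* C : numClosedFieldType plays the role of the complex numbers; its real
   elements (Num.real) play the role of R.  Conjugate transpose: M ^t*. *)

Section Defs.
Variable C : numClosedFieldType.

Definition stiefel (r n : nat) (X : 'M[C]_(n, r)) : Prop :=
  X \is a realmx /\ X^T *m X = 1%:M.

Definition gen_eigenvector n (A : 'M[C]_n) (v : 'cV[C]_n) : Prop :=
  v != 0 /\ exists (l : C) (k : nat), ((A - l%:M) ^+ k.+1) *m v = 0.

Definition unit_normcv n (v : 'cV[C]_n) : Prop := v ^t* *m v = 1%:M.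

Definition herm_posdef n (S : 'M[C]_n) : Prop :=
  S ^t* = S /\ forall v : 'cV[C]_n, v != 0 -> 0 < (v ^t* *m S *m v) 0 0.

Definition inv_sqrtmx n (M S : 'M[C]_n) : Prop :=
  herm_posdef S /\ S *m S = invmx M.

Definition SigmaP r m (Psi P : 'M[C]_(r + m)) : 'M[C]_(r + m) :=
  P ^t* *m Psi ^t* *m Psi *m P.

Definition Sigma11P r m (Psi P : 'M[C]_(r + m)) : 'M[C]_r :=
  ulsubmx (SigmaP Psi P).

End Defs.

(* Main.v *)
Require Import Defs.
From HB Require Import structures.
From mathcomp Require Import all_boot all_order all_algebra.
From mathcomp Require Import sesquilinear spectral.
Import Order.TTheory GRing.Theory Num.Theory.
Local Open Scope ring_scope.
Local Open Scope sesquilinear_scope.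

Theorem lemma2 (C : numClosedFieldType) (r m : nat)
  (hr : (1 <= r)%N) (hm : (1 <= m)%N)
  (A : 'M[C]_(r + m)) (Psi : 'M[C]_(r + m))
  (hA : A \is a realmx)
  (hPsi : Psi \in unitmx)
  (hcols : forall j : 'I_(r + m),
      unit_normcv (col j Psi) /\ gen_eigenvector A (col j Psi))
  (U : 'M[C]_(r + m, r)) (hU : stiefel U)
  (P : 'M[C]_(r + m)) (hP : P \is unitarymx)
  (K : 'M[C]_r) (hK : K \in unitmx)
  (hdec : invmx Psi *m U = P *m col_mx K 0)
  (S : 'M[C]_r) (hS : inv_sqrtmx (Sigma11P Psi P) S) :
  exists WP : 'M[C]_r,
    WP \is unitarymx /\ K = S *m WP /\
    forall W : 'M[C]_r, W \is a realmx -> W \is unitarymx ->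
      Psi *m P *m col_mx (S *m WP *m W) 0 = U *m W /\ stiefel (U *m W).
Proof.
case: hU => Ureal UTU.
case: hS => [[Sh _] SS].
have hUe : U = Psi *m P *m col_mx K 0.
  by rewrite -mulmxA -hdec mulKVmx.
have UC : U ^t* = U^T by rewrite -map_trmx realmxC.
set X := col_mx K 0 : 'M[C]_(r + m, r).
have key : K ^t* *m Sigma11P Psi P *m K = 1%:M.
  have : U ^t* *m U = 1%:M by rewrite UC.
  rewrite {1}hUe {1}hUe !trmx_mul !map_mxM.
  have -> : X ^t* = row_mx (K ^t*) 0.
    by rewrite /X tr_col_mx map_row_mx trmx0 map_mx0.
  rewrite /Sigma11P /SigmaP.
  set Sg := P ^t* *m Psi ^t* *m Psi *m P.
  have e : row_mx (K ^t*) 0 *m Sg *m X = K ^t* *m ulsubmx Sg *m K.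
    by rewrite -[Sg]submxK mul_row_block !mul0mx !addr0 /X mul_row_col ?mul0mx ?mulmx0 ?addr0 block_mxKul.
  move=> H; rewrite -{}H -e /Sg /X !mulmxA; reflexivity.
have SigK : Sigma11P Psi P *m (K *m K ^t*) = 1%:M.
  by rewrite mulmxA; apply: mulmx1C; rewrite mulmxA.
have [Sgu _] := mulmx1_unit SigK.
have invS : invmx (Sigma11P Psi P) = K *m K ^t*.
  by rewrite -[RHS](mulKmx Sgu) SigK mulmx1.
have Su : S \in unitmx.
  have : S *m S \in unitmx by rewrite SS unitmx_inv.
  by rewrite unitmx_mul => /andP[].
have SiC : (invmx S) ^t* = invmx S.
  by rewrite -map_trmx map_invmx trmx_inv map_trmx Sh.
exists (invmx S *m K); split; last split.
- apply/unitarymxP.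
  rewrite trmx_mul map_mxM SiC !mulmxA -(mulmxA _ K) -invS -SS.
  by rewrite mulmxA mulVmx // mul1mx mulmxV.
- by rewrite mulKVmx.
move=> W Wreal Wu.
have WC : W ^t* = W^T by rewrite -map_trmx realmxC.
rewrite mulKVmx //; split.
  by rewrite hUe -!mulmxA mul_col_mx mul0mx.
split.
  by apply: mxOverM.
rewrite trmx_mul mulmxA -(mulmxA _ _ U) UTU mulmx1.
by apply: mulmx1C; rewrite -WC; apply/unitarymxP.
Qed.
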